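(* For all $P,Q\in\mathbf{R}^3$, $\rho_t(P,Q)\to d_E(P,Q)$ as $t$ increases to $1$ (i.e. $\lim_{t\to 1^-}\rho_t(P,Q)=d_E(P,Q)$).
   Context: $d_E$ denotes the Euclidean metric on $\mathbf{R}^3$. For $0<t\leq 1$ let $\alpha=\sin^{-1}\!\left(\frac{\sqrt{2-t^2}-t}{2}\right)$. For $X,Y\in\mathbf{R}^3$ with $d_E(X,Y)\leq 2$, choose a sphere of radius $1$ with center $C$ containing $X$ and $Y$, let $X'=2C-X$, and define $$d_t(X,Y)=\begin{cases} d_E(X,Y) & \text{if } \angle XCY\leq \pi-2\alpha,\\ 2t+d_E(X',Y) & \text{if } \angle XCY>\pi-2\alpha,\end{cases}$$ which depends only on $s=d_E(X,Y)$ (since $\angle XCY=2\sin^{-1}(s/2)$ and $d_E(X',Y)=\sqrt{4-s^2}$). For $P,Q\in\mathbf{R}^3$ let $\Gamma_{P,Q}$ be the set of finite sequences $(X_0,\dots,X_n)$, $n\in\mathbf{N}$, in $\mathbf{R}^3$ with $X_0=P$, $X_n=Q$, $d_E(X_{i-1},X_i)\leq 2$ for $1\leq i\leq n$, and $$\rho_t(P,Q)=\inf_{(X_0,\dots,X_n)\in\Gamma_{P,Q}}\sum_{i=1}^n d_t(X_{i-1},X_i).$$ *)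

(* Defs.v *)
From Stdlib Require Import Reals List.
From Coquelicot Require Import Coquelicot.
Open Scope R_scope.

Definition pt : Type := (R * R * R)%type.

Definition dE (X Y : pt) : R :=
  let '(x1, x2, x3) := X in let '(y1, y2, y3) := Y in
  sqrt ((x1 - y1) ^ 2 + (x2 - y2) ^ 2 + (x3 - y3) ^ 2).

Definition alpha (t : R) : R := asin ((sqrt (2 - t ^ 2) - t) / 2).

(* angle XCY for two points at distance s on a unit sphere centered at C *)
Definition angleXCY (s : R) : R := 2 * asin (s / 2).

(* d_E(X', Y) with X' = 2C - X the antipode of X *)
Definition dE_antipode (s : R) : R := sqrt (4 - s ^ 2).

(* d_t(X,Y), for d_E(X,Y) <= 2 *)
Definition d_t (t : R) (X Y : pt) : R :=
  let s := dE X Y in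
  if Rle_dec (angleXCY s) (PI - 2 * alpha t) then s
  else 2 * t + dE_antipode s.

(* The sequence (X_0,...,X_n) is represented by X_0 and the list [X_1;...;X_n]. *)
Fixpoint steps_ok (x : pt) (l : list pt) : Prop :=
  match l with
  | nil => True
  | y :: l' => dE x y <= 2 /\ steps_ok y l'
  end.

Fixpoint chain_cost (t : R) (x : pt) (l : list pt) : R :=
  match l with
  | nil => 0
  | y :: l' => d_t t x y + chain_cost t y l'
  end.

Definition chain_costs (t : R) (P Q : pt) (v : R) : Prop :=
  exists l : list pt, steps_ok P l /\ last l P = Q /\ v = chain_cost t P l.

(* rho_t(P,Q) as an extended real infimum (it is in fact always finite) *)
Definition rho (t : R) (P Q : pt) : Rbar := Glb_Rbar (chain_costs t P Q).

(* Main.v *)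
Require Import Defs.
From Stdlib Require Import Reals List Lra Psatz ZArith.
From Coquelicot Require Import Coquelicot.
Open Scope R_scope.

Lemma dE_nonneg A B : 0 <= dE A B.
Proof. destruct A as [[a1 a2] a3]; destruct B as [[b1 b2] b3]; apply sqrt_pos. Qed.

Lemma dE_refl A : dE A A = 0.
Proof.
  destruct A as [[a1 a2] a3]; unfold dE.
  replace ((a1 - a1) ^ 2 + (a2 - a2) ^ 2 + (a3 - a3) ^ 2) with 0 by ring.
  apply sqrt_0.
Qed.

Lemma dE_tri A B C : dE A C <= dE A B + dE B C.
Proof.
  destruct A as [[a1 a2] a3]; destruct B as [[b1 b2] b3]; destruct C as [[c1 c2] c3].
  unfold dE.
  set (u1 := a1 - b1); set (u2 := a2 - b2); set (u3 := a3 - b3).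
  set (v1 := b1 - c1); set (v2 := b2 - c2); set (v3 := b3 - c3).
  replace (a1 - c1) with (u1 + v1) by (unfold u1, v1; ring).
  replace (a2 - c2) with (u2 + v2) by (unfold u2, v2; ring).
  replace (a3 - c3) with (u3 + v3) by (unfold u3, v3; ring).
  set (U := u1 ^ 2 + u2 ^ 2 + u3 ^ 2).
  set (V := v1 ^ 2 + v2 ^ 2 + v3 ^ 2).
  assert (HU : 0 <= U) by (unfold U; nra).
  assert (HV : 0 <= V) by (unfold V; nra).
  pose proof (sqrt_pos U) as Ha. pose proof (sqrt_pos V) as Hb.
  pose proof (sqrt_sqrt U HU) as Ha2. pose proof (sqrt_sqrt V HV) as Hb2.
  set (a := sqrt U) in *. set (b := sqrt V) in *.
  assert (CS : (u1*v1+u2*v2+u3*v3)^2 <= (a*b)^2).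
  { replace ((a*b)^2) with ((a*a)*(b*b)) by ring. rewrite Ha2, Hb2. unfold U, V.
    assert (E : (u1 ^ 2 + u2 ^ 2 + u3 ^ 2) * (v1 ^ 2 + v2 ^ 2 + v3 ^ 2) - (u1*v1+u2*v2+u3*v3)^2
      = (u1*v2-u2*v1)^2+(u1*v3-u3*v1)^2+(u2*v3-u3*v2)^2) by ring.
    assert (0 <= (u1*v2-u2*v1)^2+(u1*v3-u3*v1)^2+(u2*v3-u3*v2)^2) by (apply Rplus_le_le_0_compat; [apply Rplus_le_le_0_compat|]; apply pow2_ge_0).
    lra. }
  assert (CS2 : u1*v1+u2*v2+u3*v3 <= a*b).
  { assert (Hab : 0 <= a * b) by (apply Rmult_le_pos; auto).
    set (x := u1*v1+u2*v2+u3*v3) in *.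
    destruct (Rle_dec x (a*b)) as [h|h]; auto. exfalso.
    assert (a * b < x) by lra.
    assert ((a*b)^2 < x^2) by (simpl; nra).
    lra. }
  rewrite <- (sqrt_square (a + b)) by lra.
  apply sqrt_le_1_alt.
  replace ((a+b)*(a+b)) with (a*a + b*b + 2*(a*b)) by ring.
  rewrite Ha2, Hb2. unfold U, V. nra.
Qed.

Lemma dt_lower t A B : 0 <= t <= 1 -> dE A B <= 2 -> t * dE A B <= d_t t A B.
Proof.
  intros Ht Hs. pose proof (dE_nonneg A B). unfold d_t.
  destruct Rle_dec.
  - nra.
  - pose proof (sqrt_pos (4 - dE A B ^ 2)). unfold dE_antipode. nra.
Qed.

Lemma last_cons_eq (y A : pt) (l : list pt) : last (y :: l) A = last l y.
Proof.
  revert y A. induction l as [|z l IH]; intros y A; [reflexivity|].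
  change (last (z :: l) A = last (z :: l) y).
  rewrite IH. symmetry. apply IH.
Qed.

Lemma chain_lower t A l : 0 <= t <= 1 -> steps_ok A l ->
  t * dE A (last l A) <= chain_cost t A l.
Proof.
  intros Ht. revert A. induction l as [|y l IH]; intros A Hs.
  - simpl. rewrite dE_refl. lra.
  - destruct Hs as [H1 H2].
    pose proof (dt_lower t A y Ht H1). pose proof (IH y H2).
    assert (Hl : last (y :: l) A = last l y).
    { apply last_cons_eq. }
    rewrite Hl. cbn [chain_cost]. pose proof (dE_tri A y (last l y)). nra.
Qed.

Lemma asin_le_mono x y : -1 <= x -> x <= y -> y <= 1 -> asin x <= asin y.
Proof.
  intros H1 H2 H3.
  destruct (Rle_dec (asin x) (asin y)) as [h|h]; auto.
  exfalso.
  pose proof (asin_bound x). pose proof (asin_bound y).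
  assert (Hsin : sin (asin y) < sin (asin x)) by (apply sin_increasing_1; lra).
  rewrite !sin_asin in Hsin by lra. lra.
Qed.

Lemma sqrt2_facts : sqrt 2 * sqrt 2 = 2 /\ 1 < sqrt 2.
Proof.
  split. apply sqrt_sqrt; lra.
  rewrite <- sqrt_1. apply sqrt_lt_1_alt. lra.
Qed.

Lemma alpha_le t : 0 < t <= 1 -> alpha t <= PI / 4.
Proof.
  intros Ht. unfold alpha. rewrite <- asin_inv_sqrt2.
  destruct sqrt2_facts as [H2 H1].
  assert (Hs : sqrt (2 - t ^ 2) <= sqrt 2) by (apply sqrt_le_1_alt; nra).
  pose proof (sqrt_pos (2 - t^2)).
  assert (Hi : / sqrt 2 = sqrt 2 / 2) by (field_simplify_eq; lra).
  apply asin_le_mono; rewrite ?Hi; try lra.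
  assert (/ sqrt 2 < 1) by (rewrite Hi; nra). lra.
Qed.

Lemma dt_good t A B : 0 < t <= 1 -> dE A B <= 1 -> d_t t A B = dE A B.
Proof.
  intros Ht Hs. unfold d_t. destruct Rle_dec as [h|h]; auto.
  exfalso; apply h. pose proof (alpha_le t Ht). pose proof (dE_nonneg A B).
  unfold angleXCY.
  assert (asin (dE A B / 2) <= PI / 4).
  { rewrite <- asin_inv_sqrt2. destruct sqrt2_facts as [H2 H1].
    assert (Hi : / sqrt 2 = sqrt 2 / 2) by (field_simplify_eq; lra).
    apply asin_le_mono; rewrite ?Hi; try lra; nra. }
  lra.
Qed.

Definition lerp (A B : pt) (c : R) : pt :=
  let '(a1, a2, a3) := A in let '(b1, b2, b3) := B in
  (a1 + c * (b1 - a1), a2 + c * (b2 - a2), a3 + c * (b3 - a3)).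

Lemma dE_scale (c x1 x2 x3 : R) :
  sqrt ((c * x1) ^ 2 + (c * x2) ^ 2 + (c * x3) ^ 2) = Rabs c * sqrt (x1 ^ 2 + x2 ^ 2 + x3 ^ 2).
Proof.
  replace ((c * x1) ^ 2 + (c * x2) ^ 2 + (c * x3) ^ 2) with (Rsqr c * (x1 ^ 2 + x2 ^ 2 + x3 ^ 2))
    by (unfold Rsqr; ring).
  rewrite sqrt_mult_alt by apply Rle_0_sqr. rewrite sqrt_Rsqr_abs. reflexivity.
Qed.

Lemma dE_lerp1 A B c : dE A (lerp A B c) = Rabs c * dE A B.
Proof.
  destruct A as [[a1 a2] a3]; destruct B as [[b1 b2] b3]; unfold dE, lerp.
  rewrite <- dE_scale. f_equal. ring.
Qed.

Lemma dE_lerp2 A B c : dE (lerp A B c) B = Rabs (1 - c) * dE A B.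
Proof.
  destruct A as [[a1 a2] a3]; destruct B as [[b1 b2] b3]; unfold dE, lerp.
  rewrite <- dE_scale. f_equal. ring.
Qed.

Lemma chain_exists t (Ht : 0 < t <= 1) : forall n A B, dE A B <= INR n + 1 ->
  exists l, steps_ok A l /\ last l A = B /\ chain_cost t A l = dE A B.
Proof.
  induction n as [|n IH]; intros A B Hd.
  - simpl in Hd. exists (B :: nil). simpl. rewrite dt_good by lra.
    split; [split; [lra|exact I]|split; [reflexivity|ring]].
  - destruct (Rle_dec (dE A B) 1) as [h|h].
    + exists (B :: nil). simpl. rewrite dt_good by lra.
      split; [split; [lra|exact I]|split; [reflexivity|ring]].
    + set (d := dE A B) in *. set (M := lerp A B (/ d)).
      assert (Hdp : 0 < d) by lra.
      assert (HAM : dE A M = 1).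
      { unfold M. rewrite dE_lerp1. rewrite Rabs_pos_eq.
        fold d. field. lra. left. apply Rinv_0_lt_compat. lra. }
      assert (HMB : dE M B = d - 1).
      { unfold M. rewrite dE_lerp2. rewrite Rabs_pos_eq.
        fold d. field. lra.
        assert (/ d < 1). { rewrite <- Rinv_1. apply Rinv_lt_contravar; lra. }
        lra. }
      rewrite S_INR in Hd.
      destruct (IH M B) as [l [H1 [H2 H3]]]. lra.
      exists (M :: l). simpl. rewrite dt_good by lra.
      split; [split; [lra|exact H1]|split].
      * rewrite <- (last_cons_eq M A l) in H2. exact H2.
      * rewrite H3, HAM, HMB. ring.
Qed.

Lemma rho_bounds t P Q : 0 < t <= 1 ->
  exists r, rho t P Q = Finite r /\ t * dE P Q <= r <= dE P Q.
Proof.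
  intros Ht. unfold rho.
  destruct (Glb_Rbar_correct (chain_costs t P Q)) as [Hlb Hglb].
  assert (Hup : Rbar_le (Glb_Rbar (chain_costs t P Q)) (dE P Q)).
  { apply Hlb.
    set (n := Z.to_nat (up (dE P Q))).
    destruct (archimed (dE P Q)) as [Ha _].
    assert (Hn : dE P Q <= INR n + 1).
    { unfold n. pose proof (dE_nonneg P Q).
      assert (0 <= up (dE P Q))%Z. { apply le_IZR. lra. }
      rewrite INR_IZR_INZ, Z2Nat.id by assumption. lra. }
    destruct (chain_exists t Ht n P Q Hn) as [l [H1 [H2 H3]]].
    exists l. auto. }
  assert (Hlow : Rbar_le (t * dE P Q) (Glb_Rbar (chain_costs t P Q))).
  { apply Hglb. intros x [l [H1 [H2 H3]]]. simpl. subst x.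
    rewrite <- H2. apply chain_lower; auto. lra. }
  destruct (Glb_Rbar (chain_costs t P Q)) as [r| |]; simpl in *; try contradiction.
  exists r. auto.
Qed.

Theorem mainTheorem5 : forall P Q : pt,
  filterlim (fun t => rho t P Q) (at_left 1) (Rbar_locally (Finite (dE P Q))).
Proof.
  intros P Q P0 [eps Heps].
  set (d := dE P Q).
  pose proof (dE_nonneg P Q) as Hd0. fold d in Hd0.
  assert (Hdel : 0 < Rmin (1/2) (eps / (d + 1))).
  { apply Rmin_pos. lra. apply Rdiv_lt_0_compat. apply cond_pos. lra. }
  exists (mkposreal _ Hdel). intros y Hy Hylt.
  change (Rabs (y - 1) < Rmin (1/2) (eps / (d + 1))) in Hy.
  pose proof (Rmin_l (1/2) (eps / (d + 1))). pose proof (Rmin_r (1/2) (eps / (d + 1))).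
  apply Rabs_lt_between' in Hy.
  destruct (rho_bounds y P Q) as [r [Hr1 Hr2]]. lra.
  simpl. rewrite Hr1. apply Heps.
  change (Rabs (r - d) < eps).
  fold d in Hr2.
  assert (Hk : (1 - y) * d < eps).
  { assert (1 - y < eps / (d + 1)) by lra.
    apply Rmult_lt_compat_r with (r := d + 1) in H1; [|lra].
    replace (eps / (d + 1) * (d + 1)) with (pos eps) in H1 by (field; lra).
    nra. }
  apply Rabs_lt_between'. nra.
Qed.
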